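(* Let $n\ge 2$ and let $p_1,\dots,p_r$ be all the primes $p$ satisfying $p^{\acute v_p(n)}<\frac n2$. Then the number of vertices of full degree in $D_n$ is $$F(D_n)=n-\sum_{1\le i\le r}\left\lfloor\frac{n}{p_i^{\acute v_{p_i}(n)}}\right\rfloor+\sum_{1\le i<j\le r}\left\lfloor\frac{n}{p_i^{\acute v_{p_i}(n)}p_j^{\acute v_{p_j}(n)}}\right\rfloor-\cdots+(-1)^r\left\lfloor\frac{n}{\prod_{i=1}^r p_i^{\acute v_{p_i}(n)}}\right\rfloor.$$
   Context: $D_n$ is the graph with vertex set $\{1,\dots,n\}$ in which distinct $a,b$ are adjacent iff $\gcd(a,b)\mid n$ (the maximal Diophantine graph of order $n$). For a prime $p$, $v_p(n)$ is the exponent of $p$ in $n$ and $\acute v_p(n):=v_p(n)+1$. For a graph $G$ of order $n$, $F(G)$ is the number of vertices of degree $n-1$. *)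

(* Defs.v *)
From mathcomp Require Import all_boot all_order all_algebra.
Set Implicit Arguments. Unset Strict Implicit. Unset Printing Implicit Defensive.

(* Vertex i : 'I_n represents the integer i.+1 in {1,...,n}. *)

Definition Dn_adj (n : nat) : rel 'I_n :=
  fun a b => (a != b) && (gcdn a.+1 b.+1 %| n).

Definition deg (n : nat) (e : rel 'I_n) (a : 'I_n) : nat :=
  #|[set b : 'I_n | e a b]|.

Definition F_full (n : nat) (e : rel 'I_n) : nat :=
  #|[set a : 'I_n | deg e a == n.-1]|.

Definition vacute (p n : nat) : nat := (logn p n).+1.

(* The primes p with p^{v'_p(n)} < n/2, i.e. 2 * p^{v'_p(n)} < n.
   Every such prime is < n, so they all lie in 'I_n.+1. *)
Definition small_primes (n : nat) : {set 'I_n.+1} :=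
  [set p : 'I_n.+1 | prime p && (2 * p ^ vacute p n < n)].

(* Main.v *)
Require Import Defs.
From mathcomp Require Import all_boot all_order all_algebra.
From mathcomp Require Import zify.
Import GRing.Theory Num.Theory.

Lemma alt_sum (T : finType) (A : {set T}) :
  (\sum_(S in powerset A) (-1 : int) ^+ #|S| = (A == set0)%:R)%R.
Proof.
have [->|[x xA]] := set_0Vmem A.
  by rewrite powerset0 big_set1 cards0 eqxx expr0.
have -> : (A == set0) = false by apply/negbTE/set0Pn; exists x.
pose h (S : {set T}) := if x \in S then S :\ x else x |: S.
have hK : cancel h h.
  move=> S; rewrite /h; case: (boolP (x \in S)) => xS.
    by rewrite !inE eqxx /= setD1K.
  by rewrite setU11 setU1K.
set s := (\sum_(S in _) _)%R.
have ss : s = (- s)%R.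
  rewrite /s -sumrN (reindex_inj (can_inj hK)) /=.
  apply: eq_big => S.
    rewrite !powersetE /h; case: (boolP (x \in S)) => xS.
      apply/idP/idP => H; last by apply: subset_trans (subD1set _ _) H.
      by rewrite -(setD1K xS) subUset sub1set xA H.
    by rewrite subUset sub1set xA.
  move=> _; rewrite /h; case: (boolP (x \in S)) => xS.
    by rewrite (cardsD1 x S) xS add1n exprS mulN1r opprK.
  by rewrite cardsU1 xS add1n exprS mulN1r.
have : (s + s = 0)%R by rewrite {1}ss addNr.
move=> H; change (s = 0)%R; lia.
Qed.

Lemma prod_dvd (I : eqType) (s : seq I) (F : I -> nat) m :
  uniq s -> {in s &, forall i j, i != j -> coprime (F i) (F j)} ->
  (\prod_(i <- s) F i %| m) = all (fun i => F i %| m) s.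
Proof.
elim: s => [|x s IH] /=; first by rewrite big_nil dvd1n.
move=> /andP [xs us] cop; rewrite big_cons Gauss_dvd; last first.
  rewrite big_seq; apply: (big_ind (fun k => coprime (F x) k)) => //; first exact: coprimen1.
    by move=> a b ca cb; rewrite coprimeMr ca cb.
  move=> i iS; apply: cop.
  - by rewrite inE eqxx.
  - by rewrite inE iS orbT.
  - by apply/eqP => eix; rewrite eix iS in xs.
rewrite IH //; move=> i j iS jS; apply: cop.
- by rewrite inE iS orbT.
- by rewrite inE jS orbT.
Qed.

Lemma count_mult n m : 0 < m -> #|[set a : 'I_n | m %| a.+1]| = n %/ m.
Proof.
move=> m0; rewrite -sum1_card big_mkcond /=.
under eq_bigr => a _ do rewrite inE.
elim: n => [|n IH]; first by rewrite big_ord0 div0n.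
rewrite big_ord_recr /= IH divnS // addnC; by case: (m %| n.+1).
Qed.

Lemma not_dvd_q p n : prime p -> 0 < n -> ~~ (p ^ vacute p n %| n).
Proof. by move=> pp n0; rewrite pfactor_dvdn // /vacute ltnn. Qed.

Lemma key1 n x p : prime p -> 2 * p ^ vacute p n < n -> p ^ vacute p n %| x ->
  0 < x <= n -> exists y, [/\ 0 < y <= n, y != x & ~~ (gcdn x y %| n)].
Proof.
set q := p ^ vacute p n => pp h2 qx /andP [x0 xn].
have q0 : 0 < q by rewrite expn_gt0 prime_gt0.
have n0 : 0 < n by lia.
exists (if x == q then 2 * q else q); split.
- case: ifP => _; apply/andP; split; lia.
- case: ifP => [/eqP ->|]; first by apply/eqP; lia.
  by rewrite eq_sym => ->.
- apply/negP => gn; have := @not_dvd_q p n pp n0; rewrite -/q => /negP; apply.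
  apply: dvdn_trans gn; rewrite dvdn_gcd qx; case: ifP => _ /=.
  - exact: dvdn_mull.
  - exact: dvdnn.
Qed.

Lemma key2 n x y : 0 < x <= n -> 0 < y <= n -> x != y -> ~~ (gcdn x y %| n) ->
  exists p, [/\ prime p, p < n.+1, 2 * p ^ vacute p n < n & p ^ vacute p n %| x].
Proof.
move=> /andP [x0 xn] /andP [y0 yn] xy ng.
have n0 : 0 < n by lia.
set g := gcdn x y.
have g0 : 0 < g by rewrite gcdn_gt0 x0.
case: (boolP (has (fun p : nat => ~~ (g`_p %| n)) (primes g))) => [/hasP [p pg nd]|/hasPn H]; last first.
  exfalso; move/negP: ng; apply; apply/dvdn_partP => // p pg.
  by apply/negPn; apply: H.
have pp : prime p by move: pg; rewrite mem_primes => /andP [].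
rewrite p_part pfactor_dvdn // -ltnNge in nd.
set q := p ^ vacute p n.
have qg : q %| g by rewrite pfactor_dvdn.
have qx : q %| x by apply: dvdn_trans qg (dvdn_gcdl _ _).
have qy : q %| y by apply: dvdn_trans qg (dvdn_gcdr _ _).
have q0 : 0 < q by rewrite expn_gt0 prime_gt0.
have pq : p <= q by rewrite /q /vacute expnS leq_pmulr // expn_gt0 prime_gt0.
have q2 : 2 * q <= n.
  move: qx qy => /dvdnP [k1 e1] /dvdnP [k2 e2].
  rewrite e1 e2 in xy x0 y0 xn yn.
  have k10 : 0 < k1 by move: x0; rewrite muln_gt0 => /andP [].
  have k20 : 0 < k2 by move: y0; rewrite muln_gt0 => /andP [].
  have kk : k1 != k2 by apply: contraNneq xy => ->.
  have [h|h] : 2 <= k1 \/ 2 <= k2 by lia.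
  + apply: leq_trans xn; by rewrite leq_mul2r h orbT.
  + apply: leq_trans yn; by rewrite leq_mul2r h orbT.
have q2' : 2 * q != n.
  apply/eqP => e; have := @not_dvd_q p n pp n0; rewrite -/q -e dvdn_mull //.
exists p; split => //; lia.
Qed.

Lemma card_setZ (T : finType) (P : pred T) :
  Posz #|[set x | P x]| = (\sum_(x : T) ((P x : nat)%:R : int))%R.
Proof.
rewrite -sum1_card big_mkcond /=.
elim/big_rec2: _ => // x y z _ <-; rewrite inE PoszD.
by case: (P x).
Qed.

Local Open Scope ring_scope.

Theorem mainTheorem5 (n : nat) (hn : (2 <= n)%N) :
  (@F_full n (@Dn_adj n))%:Z =
  \sum_(S in powerset (small_primes n))
     (-1) ^+ #|S| * ((n %/ \prod_(p in S) (nat_of_ord p) ^ vacute p n)%N)%:Z.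
Proof.
set P := small_primes n.
pose D (a : 'I_n) := [set p in P | ((nat_of_ord p) ^ vacute p n %| a.+1)%N].
have n0 : (0 < n)%N by lia.
have DP a : D a \subset P by apply/subsetP => p; rewrite inE => /andP [].
have qpos (S : {set 'I_n.+1}) : S \subset P -> (0 < \prod_(p in S) (nat_of_ord p) ^ vacute p n)%N.
  move=> SP; elim/big_rec: _ => // p m pS m0.
  rewrite muln_gt0 m0 andbT expn_gt0 prime_gt0 //.
  by move: (subsetP SP p pS); rewrite inE => /andP [].
have prodDa (S : {set 'I_n.+1}) (a : 'I_n) : S \subset P ->
    (\prod_(p in S) (nat_of_ord p) ^ vacute p n %| a.+1)%N = (S \subset D a).
  move=> SP; rewrite -big_enum /= prod_dvd ?enum_uniq //.
  - apply/allP/subsetP => H p.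
    + move=> pS; rewrite inE (subsetP SP p pS) /=; apply: H; by rewrite mem_enum.
    + rewrite mem_enum => pS; have := H p pS; by rewrite inE => /andP [_ ->].
  - move=> i j iS jS ij; rewrite mem_enum in iS; rewrite mem_enum in jS.
    have := subsetP SP i iS; rewrite inE => /andP [pi _].
    have := subsetP SP j jS; rewrite inE => /andP [pj _].
    rewrite coprime_pexpl // coprime_pexpr // prime_coprime // dvdn_prime2 //.
have step1 : F_full (@Dn_adj n) = #|[set a : 'I_n | D a == set0]|.
  rewrite /F_full; apply: eq_card => a; rewrite !inE /deg.
  have sub : [set b | Dn_adj a b] \subset [set~ a].
    by apply/subsetP => b; rewrite !inE /Dn_adj => /andP [h _]; rewrite eq_sym.
  have -> : n.-1 = #|[set~ a]| by rewrite cardsC1 card_ord.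
  rewrite (subset_leqif_cards sub).2.
  apply/idP/idP.
  - move/eqP => eAB; apply/eqP/setP => p; rewrite [RHS]inE.
    apply/negbTE/negP; rewrite inE => /andP [pP qa].
    move: pP; rewrite inE => /andP [pp h2].
    have ha : (0 < a.+1 <= n)%N by rewrite ltn_ord.
    have [y [/andP [y0 yn] yx ng]] := @key1 n a.+1 p pp h2 qa ha.
    have yl : (y.-1 < n)%N by lia.
    pose b : 'I_n := Ordinal yl.
    have : b \in [set~ a].
      rewrite !inE; apply/eqP => e; move: yx; rewrite -e /=; lia.
    rewrite -eAB inE /Dn_adj => /andP [_].
    have -> : (b.+1 = y)%N by rewrite /= prednK.
    by rewrite (negbTE ng).
  - move/eqP => Da0; apply/eqP/setP => b; rewrite !inE /Dn_adj.
    apply/idP/idP => [/andP [ab _]|ba]; first by rewrite eq_sym.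
    rewrite eq_sym ba /=.
    apply/negPn/negP => ng.
    have ha : (0 < a.+1 <= n)%N by rewrite ltn_ord.
    have hb : (0 < b.+1 <= n)%N by rewrite ltn_ord.
    have hab : a.+1 != b.+1 by rewrite eqSS eq_sym.
    have [p [pp pn h2 qa]] := @key2 n a.+1 b.+1 ha hb hab ng.
    have : Ordinal pn \in D a by rewrite !inE /= pp h2 qa.
    by rewrite Da0 inE.
rewrite step1.
have -> : (#|[set a : 'I_n | D a == set0]|)%:Z =
    \sum_(a : 'I_n) ((D a == set0) : nat)%:R.
  exact: card_setZ.
have -> : \sum_(S in powerset P)
     (-1) ^+ #|S| * ((n %/ \prod_(p in S) (nat_of_ord p) ^ vacute p n)%N)%:Z
   = \sum_(S in powerset P) \sum_(a : 'I_n) (-1)^+#|S| * ((S \subset D a) : nat)%:R.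
  apply: eq_bigr => S; rewrite powersetE => SP.
  rewrite -(@count_mult n _ (qpos S SP)) card_setZ mulr_sumr.
  by apply: eq_bigr => a _; rewrite prodDa //; case: (S \subset D a).
rewrite exchange_big /=; apply: eq_bigr => a _.
rewrite -alt_sum.
rewrite big_mkcond [RHS]big_mkcond /=; apply: eq_bigr => S _.
rewrite !powersetE; case: (boolP (S \subset D a)) => SD.
- by rewrite (subset_trans SD (DP a)) mulr1.
- by case: (S \subset P); rewrite ?mulr0.
Qed.
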